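(* Let $h$ be a positive integer, let $S$ be an arbitrary set of positive integers, and let $S'=\mathbb{N}_+\setminus\{mh\mid m\in\mathbb{N}_+\setminus S\}$. Then for every integer $n\ge 0$, $$G_{S'}(n)=G_S\left(\left\lfloor\frac{n}{h}\right\rfloor\right)h+(n\bmod h).$$
   Context: $\mathbb{N}_+$ denotes the set of positive integers. For a finite set $T$ of non-negative integers, $\mathrm{mex}\,T$ is the least non-negative integer not in $T$. For a set $S$ of positive integers, $\mathrm{Subtraction}(S)$ is the impartial normal-play game on a single heap, where a move takes a heap of $x$ tokens to a heap of $x-s$ tokens for some $s\in S$ with $s\le x$. Its $\mathcal{G}$-value sequence $G_S$ is defined recursively by $G_S(x)=\mathrm{mex}\{G_S(x-s)\mid s\in S,\ s\le x\}$ for $x=0,1,2,\ldots$. *)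

(* Defs.v *)
From Stdlib Require Import Arith Lia Wf_nat ClassicalEpsilon.

(* Chosen by classical epsilon; when T is finite (as for
   all uses below) such a least element exists and is unique. *)
Definition mex (T : nat -> Prop) : nat :=
  epsilon (inhabits 0) (fun m => ~ T m /\ forall k, k < m -> T k).

Definition G_step (S : nat -> Prop) (x : nat) (g : forall y, y < x -> nat) : nat :=
  mex (fun v => exists s (H : 0 < s <= x), S s /\
                  v = g (x - s) (ltac:(lia))).

Definition G (S : nat -> Prop) : nat -> nat :=
  Fix lt_wf (fun _ => nat) (G_step S).

(* Main.v *)
Require Import Defs.
From Stdlib Require Import Arith.
From Stdlib Require Import Lia Wf_nat ClassicalEpsilon Classical FunctionalExtensionality PropExtensionality.

Lemma mex_char (P : nat -> Prop) m : ~ P m -> (forall k, k < m -> P k) -> mex P = m.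
Proof.
  intros H1 H2. unfold mex.
  destruct (epsilon_spec (inhabits 0) (fun m => ~ P m /\ forall k, k < m -> P k)
              (ex_intro _ m (conj H1 H2))) as [A B].
  set (e := epsilon _ _) in *.
  destruct (lt_eq_lt_dec e m) as [[C|C]|C]; auto.
  - exfalso; apply A, H2, C.
  - exfalso; apply H1, B, C.
Qed.

Lemma least_nonmem (P : nat -> Prop) m : ~ P m -> exists m, ~ P m /\ forall k, k < m -> P k.
Proof.
  induction m as [m IH] using (well_founded_induction lt_wf). intros Hm.
  destruct (classic (forall k, k < m -> P k)) as [H|H].
  - eauto.
  - apply not_all_ex_not in H. destruct H as [k Hk].
    apply imply_to_and in Hk. destruct Hk. eapply IH; eauto.
Qed.

Lemma mex_spec (P : nat -> Prop) : (exists m, ~ P m) -> ~ P (mex P) /\ forall k, k < mex P -> P k.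
Proof.
  intros [m Hm]. destruct (least_nonmem P m Hm) as [m' [A B]].
  rewrite (mex_char P m' A B). auto.
Qed.

Definition Opt (S : nat -> Prop) x v := exists s, (0 < s <= x) /\ S s /\ v = G S (x - s).

Lemma G_eq S x : G S x = mex (Opt S x).
Proof.
  unfold G at 1. rewrite Fix_eq.
  - unfold G_step. f_equal. apply functional_extensionality; intro v.
    apply propositional_extensionality; unfold Opt; split.
    + intros [s [H [Hs Hv]]]. exists s. split; [exact H|]. split; [exact Hs|]. exact Hv.
    + intros [s [H [Hs Hv]]]. exists s, H. split; [exact Hs|]. exact Hv.
  - intros y f g Hfg. unfold G_step. f_equal. apply functional_extensionality; intro v.
    apply propositional_extensionality; split.
    + intros [s [H [Hs Hv]]]. exists s, H. rewrite <- Hfg. auto.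
    + intros [s [H [Hs Hv]]]. exists s, H. rewrite Hfg. auto.
Qed.

Lemma nonmem S x : (forall y, y < x -> G S y <= y) -> ~ Opt S x x.
Proof.
  intros IH [s [Hs [_ Hv]]]. specialize (IH (x - s)). lia.
Qed.

Lemma G_le S x : G S x <= x.
Proof.
  induction x as [x IH] using (well_founded_induction lt_wf).
  destruct (mex_spec (Opt S x) (ex_intro _ x (nonmem S x IH))) as [_ B].
  rewrite G_eq. destruct (le_lt_dec (mex (Opt S x)) x) as [C|C]; auto.
  exfalso. apply (nonmem S x IH), B, C.
Qed.

Lemma G_mex S x : ~ Opt S x (G S x) /\ forall k, k < G S x -> Opt S x k.
Proof.
  assert (E := G_eq S x). rewrite E. apply mex_spec. exists x. apply nonmem. intros; apply G_le.
Qed.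

Lemma divmod_uniq h a b c d : b < h -> d < h -> a*h+b = c*h+d -> a = c /\ b = d.
Proof.
  intros Hb Hd E.
  assert (a = c).
  { destruct (lt_eq_lt_dec a c) as [[C|C]|C]; auto.
    - assert (a*h + h <= c*h) by nia. lia.
    - assert (c*h + h <= a*h) by nia. lia. }
  subst. lia.
Qed.

Lemma divmod_eq h a b : b < h -> (a*h+b)/h = a /\ (a*h+b) mod h = b.
Proof.
  intros Hb. split.
  - symmetry. apply (Nat.div_unique _ _ _ b); [exact Hb| lia].
  - symmetry. apply (Nat.mod_unique _ _ a); [exact Hb| lia].
Qed.

Theorem theorem2p2 (h : nat) (S : nat -> Prop) :
  0 < h ->
  (forall s, S s -> 0 < s) ->
  forall n : nat,
    G (fun s => 0 < s /\ ~ (exists m, 0 < m /\ ~ S m /\ s = m * h)) n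
    = G S (n / h) * h + n mod h.
Proof.
  intros Hh HS n.
  set (Sp := fun s => 0 < s /\ ~ (exists m, 0 < m /\ ~ S m /\ s = m * h)).
  induction n as [n IH] using (well_founded_induction lt_wf).
  set (q := n / h). set (r := n mod h).
  assert (Hn : n = q*h + r) by (pose proof (Nat.div_mod_eq n h); unfold q, r; lia).
  assert (Hr : r < h) by (apply Nat.mod_upper_bound; lia).
  assert (Key : forall c b, b < h -> c*h+b < n ->
             (forall m, 0 < m -> c + m = q -> S m) ->
             Opt Sp n (G S c * h + b)).
  { intros c b Hb Hlt Hc. exists (n - (c*h+b)). split; [lia|]. split.
    - split; [lia|]. intros [m' [Hm' [HnS Es]]].
      assert (E : q*h + r = (c + m')*h + b) by nia.
      destruct (divmod_uniq h q r (c+m') b Hr Hb E) as [E1 E2].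
      apply HnS, Hc; lia.
    - rewrite IH by lia. replace (n - (n - (c*h+b))) with (c*h+b) by lia.
      destruct (divmod_eq h c b Hb) as [-> ->]. reflexivity. }
  rewrite G_eq. apply mex_char.
  - intros [s [Hs [HSp Hv]]]. rewrite IH in Hv by lia.
    set (q' := (n - s) / h) in *. set (r' := (n - s) mod h) in *.
    assert (Hn' : n - s = q'*h + r') by (pose proof (Nat.div_mod_eq (n-s) h); unfold q', r'; lia).
    assert (Hr' : r' < h) by (apply Nat.mod_upper_bound; lia).
    destruct (divmod_uniq h _ _ _ _ Hr Hr' Hv) as [E1 E2].
    assert (Hqq : q' < q) by nia.
    set (m := q - q').
    assert (Es : s = m * h) by (unfold m; nia).
    destruct HSp as [_ Hnot].
    assert (HSm : S m).
    { destruct (classic (S m)) as [X|X]; auto. exfalso; apply Hnot. exists m.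
      unfold m; repeat split; auto; lia. }
    destruct (G_mex S q) as [A _]. apply A. exists m. split; [unfold m; lia|].
    split; [exact HSm|]. replace (q - m) with q' by (unfold m; lia). exact E1.
  - intros k Hk.
    set (a := k / h). set (b := k mod h).
    assert (Hk' : k = a*h + b) by (pose proof (Nat.div_mod_eq k h); unfold a, b; lia).
    assert (Hb : b < h) by (apply Nat.mod_upper_bound; lia).
    rewrite Hk'.
    destruct (lt_eq_lt_dec a (G S q)) as [[C|C]|C].
    + destruct (G_mex S q) as [_ B]. destruct (B a C) as [m [Hm [HSm Ha]]].
      rewrite Ha. apply Key; auto.
      * assert ((q - m)*h + h <= q*h) by nia. lia.
      * intros m' Hm' E. replace m' with m by lia. exact HSm.
    + rewrite C. assert (b < r) by (subst a; nia).
      apply Key; auto; [lia|]. intros; lia.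
    + exfalso. assert ((G S q)*h + h <= a*h) by nia. lia.
Qed.
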